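(* Let $\pi$ be a (not necessarily unique) QSD of $(X_t)_{0\le t<\tau_\partial}$, $\lambda=\lambda(\pi)$, and assume the combined Dobrushin and reverse Dobrushin condition (DRD) holds with set $A$, constants $c_0,c_1>0$ and times $t_0,t_1>0$. Define $t_3:=t_0+t_1$ and $c_3:=\lambda^{t_0}c_0c_1/\pi(A)$. Then $$\frac{P_{t_3}(x,\cdot)}{P_{t_3}1(x)}\ge c_3\,\pi(\cdot)\quad\text{for every }x\in\chi .$$
   Context: $\chi$ is a metric space with Borel $\sigma$-algebra; $\partial\notin\chi$ is a cemetery point. $(X_t)_{0\le t<\tau_\partial}$ is a killed Markov process on $\chi$ in discrete or continuous time, absorption time $\tau_\partial=\inf\{t\ge0:X_t=\partial\}$, submarkovian semigroup $P_t(x,A)=\mathbb P_x(X_t\in A,\tau_\partial>t)$; $K1(x)=K(x,\chi)$ for a kernel $K$. A QSD is a probability measure $\pi$ with $\mathbb P_\pi(X_t\in\cdot\mid\tau_\partial>t)=\pi$ for all $t$; $\lambda(\pi):=\mathbb P_\pi(\tau_\partial>1)$. Reverse Dobrushin condition (RD): there exist $t_0>0$ and a submarkovian kernel $R$ with $\pi(dx)P_{t_0}(x,dy)=\pi(dy)R(y,dx)$ as measures on $\chi\times\chi$, and $c_0>0$, $\nu\in\mathcal P(\chi)$ with $R(y,\cdot)/R1(y)\ge c_0\nu(\cdot)$ for $\pi$-a.e. $y$. Condition (DRD): there are a Borel set $A\subseteq\chi$, a probability measure $\nu_1$ with $\nu_1(\chi\setminus A)=0$, $c_1>0$ and $t_1>0$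 such that $P_{t_1}1(x)>0$ for all $x$ and $P_{t_1}(x,\cdot)/P_{t_1}1(x)\ge c_1\nu_1(\cdot)$ for all $x\in\chi$ (this forces $\pi(A)>0$); and (RD) holds with $\nu:=\pi|_A/\pi(A)$ and some $c_0>0$, $t_0>0$. *)

(* Defs.v *)
From HB Require Import structures.
From mathcomp Require Import all_boot all_order all_algebra.
From mathcomp Require Import all_classical all_reals all_analysis.
Set Implicit Arguments. Unset Strict Implicit. Unset Printing Implicit Defensive.
Import Order.TTheory GRing.Theory Num.Theory.
Local Open Scope classical_set_scope.
Local Open Scope ring_scope.

Definition borel_space (T : ptopologicalType) := g_sigma_algebraType (@open T).

Section defs.
Variables (R : realType) (T : ptopologicalType).
Local Notation X := (borel_space T).

Definition is_time (disc : bool) (t : R) : Prop :=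
  if disc then exists n : nat, t = n%:R else 0 <= t.

(* (P_t)_t is the submarkovian semigroup of a killed Markov process:
   P_t(x, A) = P_x(X_t in A, tau > t); each P_t is a subprobability kernel,
   P_0 = identity, and Chapman-Kolmogorov holds on the time set. *)
Definition submarkov_semigroup (disc : bool) (P : R -> R.-spker X ~> X) : Prop :=
  (forall (x : X) (A : set X), measurable A -> P 0 x A = dirac x A) /\
  (forall s t, is_time disc s -> is_time disc t ->
     forall (x : X) (A : set X), measurable A ->
       P (s + t) x A = (\int[P s x]_y P t y A)%E).

(* pi is a QSD: P_pi(tau > t) > 0 and P_pi(X_t in A | tau > t) = pi(A). *)
Definition is_QSD (disc : bool) (P : R -> R.-spker X ~> X)
    (pi : probability X R) : Prop :=
  forall t, is_time disc t ->
    (0 < \int[pi]_x P t x setT)%E /\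
    forall A : set X, measurable A ->
      (\int[pi]_x P t x A = (\int[pi]_x P t x setT) * pi A)%E.

(* lambda(pi) = P_pi(tau > 1) *)
Definition lambda (P : R -> R.-spker X ~> X) (pi : probability X R) : R :=
  fine (\int[pi]_x P (1%R) x setT)%E.

Definition reverse_dobrushin (disc : bool) (P : R -> R.-spker X ~> X)
    (pi : probability X R) (t0 c0 : R) (nu : set X -> \bar R) : Prop :=
  is_time disc t0 /\ 0 < t0 /\ 0 < c0 /\
  exists Rk : R.-spker X ~> X,
    (forall C : set (X * X)%type, measurable C ->
       (\int[pi]_x \int[P t0 x]_y (\1_C (x, y))%:E
        = \int[pi]_y \int[Rk y]_x (\1_C (x, y))%:E)%E) /\
    {ae pi, forall y : X, (0 < Rk y setT)%E /\
       forall B : set X, measurable B -> (c0%:E * Rk y setT * nu B <= Rk y B)%E}.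

Definition restr_norm (pi : probability X R) (A : set X) : set X -> \bar R :=
  fun B => (fine (pi (A `&` B)) / fine (pi A))%:E.

Definition DRD (disc : bool) (P : R -> R.-spker X ~> X) (pi : probability X R)
    (A : set X) (c0 c1 t0 t1 : R) : Prop :=
  measurable A /\
  (exists nu1 : probability X R,
     nu1 (~` A) = 0%E /\ is_time disc t1 /\ 0 < t1 /\ 0 < c1 /\
     forall x : X, (0 < P t1 x setT)%E /\
       forall B : set X, measurable B ->
         (c1%:E * P t1 x setT * nu1 B <= P t1 x B)%E) /\
  reverse_dobrushin disc P pi t0 c0 (restr_norm pi A).

End defs.

(* Main.v *)
Require Import Defs.
From HB Require Import structures.
From mathcomp Require Import all_boot all_order all_algebra.
From mathcomp Require Import all_classical all_reals all_analysis.
From mathcomp Require Import measurable_realfun lra ring.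
Import Order.TTheory GRing.Theory Num.Theory.
Local Open Scope classical_set_scope.
Local Open Scope ring_scope.

Lemma mix_int (R : realType) d (X : measurableType d) (k : R.-spker X ~> X)
  (pi : probability X R) (a : R) (a0 : (0 <= a)%R) :
  (forall U, measurable U -> (\int[pi]_y k y U = a%:E * pi U)%E) ->
  forall h : X -> \bar R, (forall z, 0 <= h z)%E -> measurable_fun [set: X] h ->
  (\int[pi]_y \int[k y]_z h z = a%:E * \int[pi]_z h z)%E.
Proof.
move=> hk h h0 mh.
have [x0|] := pselect (exists x : X, True); last first.
  move=> nX; rewrite !integral0_eq ?mule0 //= => x; exfalso; apply: nX; by exists x.
case: x0 => x0 _.
pose l := kprobability (measurable_cst (pi : pprobability X R) : measurable_fun setT (fun _ : X => (pi : pprobability X R))).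
pose k' := kernel.kernel_snd (T0 := X) k.
have := @integral_kcomp _ _ _ X X X R l k' x0 h h0 mh.
rewrite /= => <-.
rewrite (eq_measure_integral (mscale (NngNum a0) pi)); last first.
  move=> U mU _; rewrite /kcomp /= /mscale /= -hk //.
rewrite ge0_integral_mscale //.
Qed.

Lemma time_nat {R : realType} disc (n : nat) : is_time disc (n%:R : R).
Proof. by case: disc => /=; [exists n | exact: ler0n]. Qed.

Lemma F_bound (R : realType) (disc : bool) (F : R -> R) (t0 : R) :
 (forall t, is_time disc t -> 0 < F t <= 1) ->
 (forall s t, is_time disc s -> is_time disc t -> F (s + t) = F s * F t) ->
 is_time disc t0 ->
 F 1 `^ t0 <= F t0.
Proof.
move=> Fb Fm ht0.
have F0 : F 0 = 1.
  have := Fm 0 0 (time_nat disc 0) (time_nat disc 0); rewrite addr0.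
  have /andP[F0p _] := Fb 0 (time_nat disc 0).
  move=> /eqP; rewrite -subr_eq0 -{1}(mulr1 (F 0)) -mulrBr mulf_eq0 subr_eq0.
  by rewrite gt_eqF //= => /eqP <-.
have Fn : forall n : nat, F n%:R = F 1 ^+ n.
  elim=> [|n IH]; first by rewrite F0 expr0.
  rewrite (_ : (n.+1)%:R = n%:R + 1); last by rewrite mulrS addrC.
  rewrite Fm; [by rewrite IH exprSr | exact: time_nat | exact: (time_nat disc 1)].
have /andP[l0 l1] := Fb 1 (time_nat disc 1).
case: disc Fb Fm ht0 Fn => Fb Fm ht0 Fn.
  move: ht0; rewrite /is_time => -[n ->].
  by rewrite (Fn n) powR_mulrn // ltW.
rewrite /= in ht0.
have Fnt : forall n : nat, F (n%:R * t0) = F t0 ^+ n.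
  elim=> [|n IH]; first by rewrite mul0r F0 expr0.
  rewrite (_ : (n.+1)%:R = n%:R + 1); last by rewrite mulrS addrC.
  rewrite mulrDl mul1r Fm ?IH ?exprSr //=.
  by rewrite mulr_ge0.
have mono : forall s t, 0 <= s -> 0 <= t -> F (s + t) <= F s.
  move=> s t s0 t0'; rewrite Fm //.
  have /andP[Fs0 _] := Fb s s0; have /andP[_ Ft1] := Fb t t0'.
  by rewrite ler_piMr // ltW.
have key : forall n : nat, (F 1 `^ t0) ^+ n * F 1 <= F t0 ^+ n.
  move=> n; set x := n%:R * t0.
  have x0 : 0 <= x by rewrite mulr_ge0.
  set m := (Num.truncn x).+1.
  have hm1 : x < m%:R by exact: truncnS_gt.
  have hm2 : m%:R <= x + 1.
    by rewrite /m mulrS addrC lerD2r truncn_le.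
  have : F m%:R <= F x.
    have -> : (m%:R : R) = x + (m%:R - x) by rewrite addrC subrK.
    by apply: mono => //; rewrite subr_ge0 ltW.
  rewrite Fn Fnt; apply: le_trans.
  rewrite -(powR_mulrn _ (powR_ge0 _ _)) -powRrM -(powR_mulrn _ (ltW l0)).
  rewrite -[X in _ * X <= _](powRr1 (ltW l0)) -powRD; last by rewrite (gt_eqF l0) implybT.
  by apply: ger_powR; [rewrite l0 l1 | rewrite mulrC].
rewrite leNgt; apply/negP => hlt.
have p0 : 0 < F 1 `^ t0 by rewrite powR_gt0.
have /andP[Ft0 _] := Fb t0 ht0.
set r := F t0 / F 1 `^ t0.
have r0 : 0 <= r by rewrite divr_ge0 ?ltW.
have r1 : `|r| < 1 by rewrite ger0_norm // ltr_pdivrMr // mul1r.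
have [N _ HN] := cvgr_lt 0 (cvg_expr r1) (F 1) l0.
have := HN N (leqnn N) => /=.
have := key N; rewrite mulrC -ler_pdivlMr ?exprn_gt0 // /r expr_div_n.
by move=> /le_lt_trans /[apply]; rewrite ltxx.
Qed.

Lemma ind_prod1 (R : realType) d (X : measurableType d)
  (m : {measure set X -> \bar R}) (D E : set X) (x : X) : measurable E ->
  (\int[m]_y (\1_(D `*` E) (x, y))%:E = (\1_D x)%:E * m E)%E.
Proof.
move=> mE; have [Dx|nDx] := pselect (D x).
  rewrite indicE mem_set // mul1e -[in RHS](setIT E) -integral_indic //.
  apply: eq_integral => y _; congr (_%:E); rewrite !indicE.
  have [Ey|nEy] := pselect (E y); first by rewrite !mem_set.
  by rewrite !memNset // => -[].
rewrite indicE memNset // mul0e integral0_eq // => y _.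
by rewrite indicE memNset // => -[].
Qed.

Lemma ind_prod2 (R : realType) d (X : measurableType d)
  (m : {measure set X -> \bar R}) (D E : set X) (y : X) : measurable D ->
  (\int[m]_x (\1_(D `*` E) (x, y))%:E = (\1_E y)%:E * m D)%E.
Proof.
move=> mD; have [Ey|nEy] := pselect (E y).
  rewrite indicE mem_set // mul1e -[in RHS](setIT D) -integral_indic //.
  apply: eq_integral => x _; congr (_%:E); rewrite !indicE.
  have [Dx|nDx] := pselect (D x); first by rewrite !mem_set.
  by rewrite !memNset // => -[].
rewrite indicE memNset // mul0e integral0_eq // => x _.
by rewrite indicE memNset // => -[].
Qed.

Lemma lim_eps (R : realType) (K c Y : R) : 0 < K -> 0 <= c -> 0 <= Y ->
  (forall e, 0 < e -> e < K -> (K - e) * c <= Y) -> K * c <= Y.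
Proof.
move=> K0 c0 Y0 H; rewrite leNgt; apply/negP => hlt.
have cp : 0 < c.
  rewrite lt_neqAle c0 andbT; apply/negP => /eqP c0'.
  by move: hlt; rewrite -c0' mulr0 ltNge Y0.
pose e := (K * c - Y) / (2 * c).
have ep : 0 < e by rewrite divr_gt0 ?subr_gt0 ?mulr_gt0.
have eK : e < K.
  rewrite /e ltr_pdivrMr ?mulr_gt0 //; nra.
have ec : e * c = (K * c - Y) / 2 by rewrite /e; field; rewrite gt_eqF.
have := H e ep eK; rewrite mulrBl ec; lra.
Qed.

Lemma ind_ge0 {R : realType} {T : Type} (A : set T) (y : T) : (0 : R) <= \1_A y.
Proof. by rewrite indicE ler0n. Qed.

Theorem mainTheorem4 (R : realType) (T : pseudoPMetricType R)
    (hT : hausdorff_space T) (disc : bool)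
    (P : R -> R.-spker (borel_space T) ~> (borel_space T))
    (pi : probability (borel_space T) R) (A : set (borel_space T))
    (c0 c1 t0 t1 : R) :
  submarkov_semigroup disc P ->
  is_QSD disc P pi ->
  DRD disc P pi A c0 c1 t0 t1 ->
  let lam := lambda P pi in
  let t3 := t0 + t1 in
  let c3 := lam `^ t0 * c0 * c1 / fine (pi A) in
  forall (x : borel_space T) (B : set (borel_space T)), measurable B ->
    (c3%:E * P t3 x setT * pi B <= P t3 x B)%E.
Proof.
move=> [_ CK] HQ [mA [[nu1 [nu1A [ht1 [t1p [c1p Hdob]]]]] [ht0 [t0p [c0p [Rk [Hrev Hae]]]]]]].
move=> lam t3 c3 x B mB.
have Ple1 : forall t y, (P t y setT <= 1)%E by move=> t y; exact: sprob_kernel_le1.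
have Pge0 : forall t y U, (0 <= P t y U)%E by move=> *; exact: measure_ge0.
have PleT : forall t y U, measurable U -> (P t y U <= P t y setT)%E.
  by move=> t y U mU; apply: le_measure; rewrite ?inE.
have mk : forall t U, measurable U -> measurable_fun setT (fun y => P t y U).
  by move=> t U mU; exact: measurable_kernel.
pose f t := (\int[pi]_y P t y setT)%E.
have f_ge0 : forall t, (0 <= f t)%E by move=> t; apply: integral_ge0.
have f_le1 : forall t, (f t <= 1)%E.
  move=> t; apply: (@le_trans _ _ (\int[pi]_y (cst 1%E) y)%E).
    by apply: ge0_le_integral => //; exact: mk.
  by rewrite (integral_cst _ measurableT) mul1e; apply: probability_le1.
pose F t := fine (f t).
have fF : forall t, f t = (F t)%:E.
  by move=> t; rewrite fineK // ge0_fin_numE // (le_lt_trans (f_le1 t)) // ltey.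
have Fb : forall t, is_time disc t -> 0 < F t <= 1.
  move=> t ht; have [hp _] := HQ t ht.
  by rewrite -lte_fin -fF hp -lee_fin -fF f_le1.
have HQr : forall t U, is_time disc t -> measurable U ->
    (\int[pi]_y P t y U = (F t)%:E * pi U)%E.
  by move=> t U ht mU; have [_ h] := HQ t ht; rewrite h // -fF.
have Fm : forall s t, is_time disc s -> is_time disc t -> F (s + t) = F s * F t.
  move=> s t hs ht.
  have a0 : 0 <= F s by have /andP[/ltW] := Fb s hs.
  have E1 := @mix_int R _ _ (P s) pi (F s) a0 (fun U mU => HQr s U hs mU)
    (fun y => P t y setT) (fun z => Pge0 _ _ _) (mk t setT measurableT).
  have E2 : f (s + t) = (\int[pi]_y \int[P s y]_z P t z setT)%E.
    by apply: eq_integral => y _; rewrite CK.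
  have : f (s + t) = ((F s)%:E * f t)%E by rewrite E2 E1.
  rewrite fF (fF t) => h; apply: EFin_inj; by rewrite h EFinM.
have hF : lam `^ t0 <= F t0 by exact: (@F_bound R disc F t0 Fb Fm ht0).
have piF : forall U, measurable U -> pi U = (fine (pi U))%:E.
  move=> U mU; rewrite fineK // ge0_fin_numE //.
  by rewrite (le_lt_trans (probability_le1 pi mU)) // ltey.
pose pA := fine (pi A); pose pB := fine (pi B).
have pA0 : 0 <= pA by rewrite /pA fine_ge0.
have pB0 : 0 <= pB by rewrite /pB fine_ge0.
have [pAz|pApos] : pA = 0 \/ 0 < pA.
  by move: pA0; rewrite le_eqVlt => /orP[/eqP <-|->]; [left|right].
  by rewrite /c3 -/pA pAz invr0 mulr0 !mul0e.
have [pBz|pBpos] : pB = 0 \/ 0 < pB.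
  by move: pB0; rewrite le_eqVlt => /orP[/eqP <-|->]; [left|right].
  by rewrite (piF B mB) -/pB pBz mule0.
have Ft0p : 0 < F t0 by have /andP[] := Fb t0 ht0.
have mRk : forall U, measurable U -> measurable_fun setT (fun y => Rk y U).
  by move=> U mU; exact: measurable_kernel.
have Rev : forall D, measurable D ->
    ((c0 * F t0 * pB * (fine (pi (A `&` D)) / pA))%:E <=
     \int[pi]_y ((\1_D y)%:E * P t0 y B))%E.
  move=> D mD.
  set nuD := fine (pi (A `&` D)) / pA.
  have nuD0 : 0 <= nuD by rewrite /nuD divr_ge0 // fine_ge0.
  have e1 : (\int[pi]_y ((\1_D y)%:E * P t0 y B) =
      \int[pi]_y \int[P t0 y]_z (\1_(D `*` B) (y, z))%:E)%E.
    by apply: eq_integral => y _; rewrite ind_prod1.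
  rewrite e1 Hrev; last exact: measurableX.
  under eq_integral => y _ do rewrite ind_prod2 //.
  have e2 : (\int[pi]_y ((\1_B y)%:E * Rk y setT) = (F t0)%:E * pi B)%E.
    transitivity (\int[pi]_y \int[Rk y]_z (\1_(setT `*` B) (z, y))%:E)%E.
      by apply: eq_integral => y _; rewrite ind_prod2.
    rewrite -Hrev; last exact: measurableX.
    rewrite -HQr //; apply: eq_integral => y _.
    by rewrite ind_prod1 // indicT mul1e.
  apply: (@le_trans _ _ (\int[pi]_y ((\1_B y)%:E * Rk y setT * (c0 * nuD)%:E))%E).
    rewrite ge0_integralZr //; first last.
    - by rewrite lee_fin mulr_ge0 // ltW.
    - apply: emeasurable_funM; last exact: mRk.
      by apply/measurable_EFinP; exact: measurable_indic.
    rewrite e2 (piF B mB) -/pB -!EFinM lee_fin (_ : c0 * F t0 * pB * nuD = F t0 * pB * (c0 * nuD)) //; ring.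
  apply: ae_ge0_le_integral => //.
  - move=> y _; rewrite mule_ge0 // ?mule_ge0 // lee_fin ?ind_ge0 //.
    by rewrite mulr_ge0 // ltW.
  - apply: emeasurable_funM; last exact: measurable_cst.
    apply: emeasurable_funM; last exact: mRk.
    by apply/measurable_EFinP; exact: measurable_indic.
  - apply: emeasurable_funM; last exact: mRk.
    by apply/measurable_EFinP; exact: measurable_indic.
  apply: filterS Hae => y [_ Hy] _.
  rewrite -muleA; apply: lee_wpmul2l; first by rewrite lee_fin ind_ge0.
  have := Hy D mD; rewrite /restr_norm -/pA => h; apply: le_trans h.
  by rewrite /nuD [in X in (X <= _)%E]EFinM muleCA muleA.
have PF : forall t y U, measurable U -> P t y U = (fine (P t y U))%:E.
  move=> t y U mU; rewrite fineK // ge0_fin_numE //.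
  by rewrite (le_lt_trans (PleT t y U mU)) // (le_lt_trans (Ple1 t y)) // ltey.
have nuF : forall U, measurable U -> nu1 U = (fine (nu1 U))%:E.
  move=> U mU; rewrite fineK // ge0_fin_numE //.
  by rewrite (le_lt_trans (probability_le1 nu1 mU)) // ltey.
have Ft1p : 0 < F t1 by have /andP[] := Fb t1 ht1.
have ac : forall U, measurable U -> pi U = 0%E -> nu1 U = 0%E.
  move=> U mU p0.
  have h1 : (\int[pi]_y (c1%:E * nu1 U * P t1 y setT) <= \int[pi]_y P t1 y U)%E.
    apply: ge0_le_integral => //.
    - by move=> y _; rewrite !mule_ge0 // lee_fin ltW.
    - by apply: emeasurable_funM; [exact: measurable_cst | exact: mk].
    - exact: mk.
    - by move=> y _; have [_ Hy] := Hdob y; rewrite muleAC; exact: Hy.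
  rewrite (@ge0_integralZl _ _ _ pi setT measurableT (fun y => P t1 y setT) (mk t1 setT measurableT)) in h1; last 2 first.
    - by [].
    - by rewrite mule_ge0 // lee_fin ltW.
  move: h1; rewrite HQr // p0 mule0 -/(f t1) fF (nuF U mU) -!EFinM lee_fin => h1.
  rewrite (nuF U mU); congr (_%:E).
  have n0 : 0 <= fine (nu1 U) by rewrite fine_ge0.
  apply/eqP; rewrite eq_le n0 andbT.
  rewrite /=; move: h1; rewrite -mulrA (mulrC (fine _)) pmulr_rle0 // pmulr_rle0 //.
pose K := c0 * F t0 * pB / pA.
have Kp : 0 < K by rewrite /K !mulr_gt0 // invr_gt0.
pose Q1 := fine (P t1 x setT).
pose Yv := fine (P t3 x B).
have Q1ge0 : 0 <= Q1 by rewrite /Q1 fine_ge0.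
have Yge0 : 0 <= Yv by rewrite /Yv fine_ge0.
have keyY : K * (c1 * Q1) <= Yv.
  apply: lim_eps => //; first by rewrite mulr_ge0 // ltW.
  move=> e e0 eK.
  pose S := [set y | (P t0 y B <= (K - e)%:E)%E].
  have mS : measurable S.
    have := measurable_lee measurableT (mk t0 B mB) (measurable_cst (K - e)%:E).
    by rewrite setTI.
  pose De := A `&` S.
  have mDe : measurable De by exact: measurableI.
  have piDe : pi De = 0%E.
    have h := Rev De mDe.
    rewrite (_ : A `&` De = De) in h; last by rewrite /De setIA setIid.
    have mIDe : measurable_fun setT (fun y => (\1_De y)%:E : \bar R).
      by apply/measurable_EFinP; exact: measurable_indic.
    have up : (\int[pi]_y ((\1_De y)%:E * P t0 y B) <= (K - e)%:E * pi De)%E.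
      apply: (@le_trans _ _ (\int[pi]_y ((K - e)%:E * (\1_De y)%:E))%E).
        apply: ge0_le_integral => //.
        - by apply: emeasurable_funM => //; exact: mk.
        - by apply: emeasurable_funM => //; exact: measurable_cst.
        - move=> y _; rewrite !indicE; have [Dy|nDy] := pselect (De y).
            by rewrite mem_set //= mul1e mule1; case: Dy.
          by rewrite memNset //= mul0e mule0.
      rewrite (@ge0_integralZl _ _ _ pi setT measurableT (fun y => (\1_De y)%:E) mIDe).
      + by rewrite integral_indic // setIT.
      + by move=> y _; rewrite lee_fin; exact: ind_ge0.
      + by rewrite lee_fin subr_ge0 ltW.
    have := le_trans h up; rewrite (piF De mDe) -EFinM lee_fin => hq.
    have q0 : 0 <= fine (pi De) by rewrite fine_ge0.
    rewrite (piF De mDe); congr (_%:E); apply/eqP; rewrite eq_le q0 andbT.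
    have : K * fine (pi De) <= (K - e) * fine (pi De).
      by apply: le_trans hq; rewrite /K le_eqVlt; apply/orP; left; apply/eqP; field; rewrite gt_eqF.
    nra.
  have nuS : nu1 S = 0%E.
    have sub : S `<=` De `|` ~` A.
      by move=> y Sy; have [Ay|nAy] := pselect (A y); [left|right].
    have mU : measurable (De `|` ~` A) by apply: measurableU => //; exact: measurableC.
    apply/eqP; rewrite eq_le measure_ge0 andbT.
    apply: (le_trans (le_measure _ _ _ sub)); rewrite ?inE //.
    apply: le_trans (measureU2 _ _ _) _ => //; first exact: measurableC.
    have -> : (nu1 De + nu1 (~` A) = 0 + 0)%E by congr (_ + _)%E; [exact: ac | exact: nu1A].
    by rewrite adde0.
  have nuE : nu1 (~` S) = 1%E by rewrite probability_setC // nuS sube0.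
  have mSc : measurable (~` S) by exact: measurableC.
  have CK3 : P t3 x B = (\int[P t1 x]_y P t0 y B)%E by rewrite /t3 addrC CK.
  have mIS : measurable_fun setT (fun y => (\1_(~` S) y)%:E : \bar R).
    by apply/measurable_EFinP; exact: measurable_indic.
  have Ke0 : 0 <= K - e by rewrite subr_ge0 ltW.
  have low : ((K - e)%:E * P t1 x (~` S) <= P t3 x B)%E.
    have e3 : ((K - e)%:E * P t1 x (~` S) =
        \int[P t1 x]_y ((K - e)%:E * (\1_(~` S) y)%:E))%E.
      rewrite (@ge0_integralZl _ _ _ (P t1 x) setT measurableT _ mIS).
      + by rewrite integral_indic // setIT.
      + by move=> y _; rewrite lee_fin; exact: ind_ge0.
      + by rewrite lee_fin.
    rewrite e3 CK3; apply: ge0_le_integral => //.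
    - by move=> y _; apply: mule_ge0; rewrite lee_fin //; exact: ind_ge0.
    - by apply: emeasurable_funM => //; exact: measurable_cst.
    - exact: mk.
    - move=> y _; rewrite !indicE; have [Sy|nSy] := pselect ((~` S) y).
        rewrite mem_set //= mule1; apply: ltW; rewrite ltNge; apply/negP.
        exact: Sy.
      by rewrite memNset //= mule0.
  have dob : (c1%:E * P t1 x setT <= P t1 x (~` S))%E.
    by have [_ Hy] := Hdob x; have := Hy _ mSc; rewrite nuE mule1.
  have := le_trans (lee_wpmul2l _ dob) low.
  rewrite (PF t1 x setT measurableT) -/Q1 (PF t3 x B mB) -/Yv -!EFinM.
  move=> h; rewrite -lee_fin; apply: h; by rewrite -(lee_fin (0:R)) in Ke0.
have Q3le : fine (P t3 x setT) <= Q1.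
  rewrite /Q1 -lee_fin -!PF //.
  rewrite /t3 addrC CK //.
  apply: (@le_trans _ _ (\int[P t1 x]_y (cst 1%E) y)%E).
    by apply: ge0_le_integral => //; exact: mk.
  by rewrite (integral_cst _ measurableT) mul1e.
rewrite (PF t3 x setT measurableT) (PF t3 x B mB) (piF B mB) -/pB -/Yv -!EFinM lee_fin.
set Q3 := fine (P t3 x setT).
have Q3ge0 : 0 <= Q3 by rewrite /Q3 fine_ge0.
have c3le : c3 <= F t0 * c0 * c1 / pA.
  rewrite /c3 -/pA; apply: ler_wpM2r; first by rewrite invr_ge0.
  by apply: ler_wpM2r; [exact: ltW | apply: ler_wpM2r; [exact: ltW | exact: hF]].
apply: le_trans keyY.
have -> : K * (c1 * Q1) = (F t0 * c0 * c1 / pA) * Q1 * pB by rewrite /K; ring.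
apply: ler_wpM2r => //; apply: ler_pM => //.
by rewrite /c3 !mulr_ge0 // ?powR_ge0 ?invr_ge0 // ltW.
Qed.
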